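(* Let $X\subseteq[U]$ be a set of $k$ keys. Let $p>4U^2$ be a prime and $m\le U$ a positive integer, and let $h(x)=((\sigma x+\tau)\bmod p)\bmod m$ where $\sigma,\tau\in[p]$ are chosen independently and uniformly at random. Fix a key $x\notin X$ and buckets $a,b\in[m]$. Let $y,z\in X$ be chosen independently and uniformly at random (independently of $h$). Then $$\Pr\big(h(y)=h(z)=b \;\big|\; h(x)=a\big)\le \frac{1}{m^2}+O\!\left(\frac{U\log U}{mk^2}\right).$$
   Context: $[N]=\{0,1,\dots,N-1\}$. The probability is over the joint randomness of $\sigma,\tau,y,z$. The $O(\cdot)$ hides an absolute constant. *)

(* Defs.v *)
From Stdlib Require Import Reals.
From mathcomp Require Import all_boot.

Definition hfun (p m s t x : nat) : nat := ((s * x + t) %% p) %% m.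

(* Sample space: (sigma, tau, y, z) in [p] x [p] x [U] x [U], uniform,
   restricted to y, z in X (i.e. y, z uniform in X, independent of h). *)
Definition cond_count (U p m : nat) (X : {set 'I_U}) (x : 'I_U) (a : nat) : nat :=
  #|[set q : 'I_p * 'I_p * 'I_U * 'I_U |
      [&& hfun p m q.1.1.1 q.1.1.2 x == a, q.1.2 \in X & q.2 \in X]]|.

Definition joint_count (U p m : nat) (X : {set 'I_U}) (x : 'I_U) (a b : nat) : nat :=
  #|[set q : 'I_p * 'I_p * 'I_U * 'I_U |
      [&& hfun p m q.1.1.1 q.1.1.2 x == a, q.1.2 \in X, q.2 \in X,
          hfun p m q.1.1.1 q.1.1.2 q.1.2 == b & hfun p m q.1.1.1 q.1.1.2 q.2 == b]]|.

Definition cond_prob (U p m : nat) (X : {set 'I_U}) (x : 'I_U) (a b : nat) : R :=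
  Rdiv (INR (joint_count U p m X x a b)) (INR (cond_count U p m X x a)).

(* Main.v *)
Require Import Defs.
From Stdlib Require Import Reals ZArith Lia.
From Stdlib Require Znumtheory.
From mathcomp Require Import all_boot all_order all_algebra.
From mathcomp Require Import zify ring lra.
From mathcomp Require Import Rstruct.

Set Implicit Arguments.
Unset Strict Implicit.
Unset Printing Implicit Defensive.

Section ZH.
Local Open Scope Z_scope.

Lemma Zprime_of (p : nat) : prime p -> Znumtheory.prime (Z.of_nat p).
Proof.
move=> pp; apply/Znumtheory.prime_alt; split.
  have := prime_gt1 pp; lia.
move=> n hn [k hk].
have hk0 : 0 < k by nia.
have : (Z.to_nat n %| p)%N.
  apply/dvdnP; exists (Z.to_nat k); lia.
case/primeP: pp => _ /[apply] /orP [/eqP|/eqP]; lia.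
Qed.

Lemma Znotdiv (p : nat) (c : Z) : 0 < Z.abs c < Z.of_nat p -> ~ (Z.of_nat p | c).
Proof.
move=> h /Z.divide_abs_r hd.
have := Z.divide_pos_le _ _ (proj1 h) hd; lia.
Qed.

Lemma Zeuclid (p : nat) (c Y : Z) : prime p -> 0 < Z.abs c < Z.of_nat p ->
  (Z.of_nat p | c * Y) -> (Z.of_nat p | Y).
Proof.
move=> pp hc hd.
case: (Znumtheory.prime_mult _ (Zprime_of pp) _ _ hd) => // /(Znotdiv hc) [].
Qed.

Lemma same_div_eq (P Y1 Y2 : Z) : 0 < P -> Y1 / P = Y2 / P -> (P | Y1 - Y2) -> Y1 = Y2.
Proof.
move=> p0 hq [k hk].
have pn0 : P <> 0 by lia.
have d1 := Z.div_mod Y1 _ pn0; have d2 := Z.div_mod Y2 _ pn0.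
have r1 := Z.mod_pos_bound Y1 _ p0; have r2 := Z.mod_pos_bound Y2 _ p0.
rewrite hq in d1.
move: (Y1 / P) (Y2 / P) (Y1 mod P) (Y2 mod P) d1 d2 r1 r2 hk => A1 A2 R1 R2 d1 d2 r1 r2 hk.
have hb : - P < k * P < P by lia.
have : k = 0 by clear -hb p0; nia.
move=> k0; subst k; lia.
Qed.

Lemma small_div (t d : Z) : Z.abs d < Z.abs t -> (t | d) -> d = 0.
Proof.
move=> h [k hk]; subst d.
case: (Z.eq_dec k 0) => [->|kn]; first by lia.
have : Z.abs t <= Z.abs (k * t) by rewrite Z.abs_mul; nia.
lia.
Qed.

End ZH.

Section Core.
Local Open Scope Z_scope.

Lemma core (p m Jm E' : nat) (t s : Z) (Bf : nat -> Z)
  (S : {set 'I_p * 'I_p}) (A : {set 'I_p}) (Fu : 'I_p * 'I_p -> 'I_p)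
  (Fj Fl : 'I_p * 'I_p -> nat) :
  prime p -> (0 < m)%N -> (m < p)%N ->
  Z.abs t = Z.of_nat E'.+1 -> Z.abs s <= Z.abs t -> Z.gcd t s = 1 ->
  (forall st, st \in S -> Fu st \in A) ->
  (forall st, st \in S -> (Fj st <= Jm)%N /\ (Fl st <= Jm)%N) ->
  (forall st, st \in S -> (Z.of_nat p | Bf (Fu st) +
        Z.of_nat m * (t * Z.of_nat (Fl st) - s * Z.of_nat (Fj st)))) ->
  {in S &, forall st1 st2, Fu st1 = Fu st2 -> Fj st1 = Fj st2 ->
       Fl st1 = Fl st2 -> st1 = st2} ->
  (#|S| * E'.+1 <= #|A| * (Jm + E').+1 *
     (Z.to_nat ((Z.of_nat E'.+1 * Z.of_nat Jm + Z.abs s * Z.of_nat E')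
                 / Z.of_nat p)).+1)%N.
Proof.
move=> pp m0 mp ht hst gts hA hJ hC hinj.
have p0 : 0 < Z.of_nat p by have := prime_gt0 pp; lia.
set Dx := (Z.of_nat E'.+1 * Z.of_nat Jm + Z.abs s * Z.of_nat E').
set K := Z.to_nat (Dx / Z.of_nat p).
set lo := Z.min 0 (t * Z.of_nat Jm) + Z.min 0 (s * Z.of_nat E').
pose xp (q : ('I_p * 'I_p) * 'I_E'.+1) : Z :=
  t * Z.of_nat (Fl q.1) + s * Z.of_nat q.2.
pose F (q : ('I_p * 'I_p) * 'I_E'.+1) : 'I_p * 'I_(Jm + E').+1 * 'I_K.+1 :=
  (Fu q.1, inord (Fj q.1 + q.2), inord (Z.to_nat ((xp q - lo) / Z.of_nat p))).
have xb : forall q, q.1 \in S -> 0 <= xp q - lo <= Dx.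
  move=> [st e] /= /hJ [_ hl]; rewrite /xp /=; rewrite /lo /Dx.
  have he := ltn_ord e.
  have hl' : Z.of_nat (Fl st) <= Z.of_nat Jm by lia.
  have he' : Z.of_nat e <= Z.of_nat E' by lia.
  have h1 : Z.min 0 (t * Z.of_nat Jm) <= t * Z.of_nat (Fl st) <=
             Z.min 0 (t * Z.of_nat Jm) + Z.of_nat E'.+1 * Z.of_nat Jm.
    clear -ht hl'; case: (Z.abs_spec t) => [[tp ta]|[tn ta]];
    case: (Z.min_spec 0 (t * Z.of_nat Jm)) => [[hh ->]|[hh ->]]; rewrite ta in ht; nia.
  have h2 : Z.min 0 (s * Z.of_nat E') <= s * Z.of_nat e <=
             Z.min 0 (s * Z.of_nat E') + Z.abs s * Z.of_nat E'.
    clear -he'; case: (Z.abs_spec s) => [[tp ta]|[tn ta]];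
    case: (Z.min_spec 0 (s * Z.of_nat E')) => [[hh ->]|[hh ->]]; rewrite ta; nia.
  clear -h1 h2; lia.
have qb : forall q, q.1 \in S -> (Z.to_nat ((xp q - lo) / Z.of_nat p) < K.+1)%N.
  move=> q /xb hq.
  have := Z.div_le_mono _ _ _ p0 (proj2 hq).
  have := Z.div_pos _ _ (proj1 hq) p0.
  rewrite /K; lia.
pose D := setX S [set: 'I_E'.+1].
have injF : {in D &, injective F}.
  move=> [st1 e1] [st2 e2]; rewrite !inE /= !andbT => h1 h2.
  rewrite /F /= => -[hu hj hx].
  have hj1 := hJ _ h1; have hj2 := hJ _ h2.
  have e1l := ltn_ord e1; have e2l := ltn_ord e2.
  move/(congr1 (@nat_of_ord _)): hj; rewrite !inordK; [|lia|lia] => hj.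
  have qb1 := qb (st1, e1) h1; have qb2 := qb (st2, e2) h2.
  move/(congr1 (@nat_of_ord _)): hx; rewrite !inordK // => hx.
  have xb1 := xb (st1, e1) h1; have xb2 := xb (st2, e2) h2.
  move: hx xb1 xb2 qb1 qb2; rewrite /xp /= => hx xb1 xb2 _ _.
  set X1 := t * Z.of_nat (Fl st1) + s * Z.of_nat e1 in hx xb1 xb2 *.
  set X2 := t * Z.of_nat (Fl st2) + s * Z.of_nat e2 in hx xb1 xb2 *.
  have hq : (X1 - lo) / Z.of_nat p = (X2 - lo) / Z.of_nat p.
    have := Z.div_pos _ _ (proj1 xb1) p0; have := Z.div_pos _ _ (proj1 xb2) p0.
    move: hx; clear; lia.
  have hjz : Z.of_nat (Fj st1) = Z.of_nat (Fj st2) + Z.of_nat e2 - Z.of_nat e1.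
    move: hj; clear; lia.
  have hpd : (Z.of_nat p | Z.of_nat m * (X1 - X2)).
    have c1 := hC _ h1; have c2 := hC _ h2.
    rewrite hu in c1.
    have := Z.divide_sub_r _ _ _ c1 c2.
    have -> : Bf (Fu st2) + Z.of_nat m * (t * Z.of_nat (Fl st1) - s * Z.of_nat (Fj st1)) -
      (Bf (Fu st2) + Z.of_nat m * (t * Z.of_nat (Fl st2) - s * Z.of_nat (Fj st2))) =
      Z.of_nat m * (X1 - X2) by rewrite /X1 /X2 hjz; ring.
    by [].
  have hm : 0 < Z.abs (Z.of_nat m) < Z.of_nat p by move: m0 mp; clear; lia.
  have {}hpd := Zeuclid pp hm hpd.
  have hX : X1 = X2.
    have : X1 - lo = X2 - lo.
      apply: (same_div_eq p0 hq).
      by have -> : X1 - lo - (X2 - lo) = X1 - X2 by ring.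
    lia.
  have hts : (t | s * (Z.of_nat e2 - Z.of_nat e1)).
    exists (Z.of_nat (Fl st1) - Z.of_nat (Fl st2)); rewrite /X1 /X2 in hX.
    move: hX; clear; lia.
  have := Znumtheory.Gauss _ _ _ hts (proj1 (Znumtheory.Zgcd_1_rel_prime _ _) gts).
  move/small_div => hk0.
  have he : e1 = e2.
    apply/val_inj => /=.
    have : Z.of_nat e2 - Z.of_nat e1 = 0 by apply: hk0; move: ht e1l e2l; clear; lia.
    lia.
  subst e2.
  have hl : Fl st1 = Fl st2.
    rewrite /X1 /X2 in hX.
    have : t * (Z.of_nat (Fl st1) - Z.of_nat (Fl st2)) = 0 by move: hX; clear; lia.
    case/Z.mul_eq_0 => ?; lia.
  have hj' : Fj st1 = Fj st2 by move: hj; clear; lia.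
  by rewrite (hinj _ _ h1 h2 hu hj' hl).
have sub : F @: D \subset setX (setX A [set: 'I_(Jm + E').+1]) [set: 'I_K.+1].
  apply/subsetP => _ /imsetP [[st e] hq ->]; move: hq; rewrite !inE /= andbT => hs.
  by rewrite hA.
have := subset_leq_card sub.
by rewrite (card_in_imset injF) /D !cardsX !cardsT !card_ord.
Qed.

End Core.

Lemma arith_pair (p m U E Jm K : nat) : (0 < m)%N -> (m <= U)%N -> (0 < E)%N -> (E < U)%N ->
  (4 * U ^ 2 < p)%N -> (m * Jm <= p)%N -> (p * K <= E * (Jm + E))%N ->
  (m ^ 2 * (Jm + E) * K.+1 <= p * (E + 2 * m))%N.
Proof.
move=> m0 mU E0 EU pU hJ hK.
have p0 : (0 < p)%N by lia.
have hW : (m * (Jm + E) <= p + m * E)%N by lia.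
have h1 : (p * (m ^ 2 * (Jm + E) * K.+1) <= E * (p + m * E) ^ 2 + p * m * (p + m * E))%N.
  have -> : (p * (m ^ 2 * (Jm + E) * K.+1) = m ^ 2 * (Jm + E) * (p * K) + p * m * (m * (Jm + E)))%N.
    by rewrite mulnS; ring.
  have a1 : (m ^ 2 * (Jm + E) * (p * K) <= E * (m * (Jm + E)) ^ 2)%N.
    have -> : (E * (m * (Jm + E)) ^ 2 = m ^ 2 * (Jm + E) * (E * (Jm + E)))%N by ring.
    by rewrite leq_mul2l hK orbT.
  have a2 : (E * (m * (Jm + E)) ^ 2 <= E * (p + m * E) ^ 2)%N.
    by rewrite leq_mul2l leq_exp2r ?hW ?orbT.
  have a3 : (p * m * (m * (Jm + E)) <= p * m * (p + m * E))%N by rewrite leq_mul2l hW orbT.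
  lia.
have h2 : (E * (p + m * E) ^ 2 + p * m * (p + m * E) <= p * (p * (E + 2 * m)))%N.
  have b1 : (2 * E ^ 2 * p + m * E ^ 3 + m * E * p <= p ^ 2)%N.
    have c1 : (E ^ 2 <= U ^ 2)%N by rewrite leq_exp2r //; lia.
    have c2 : (m * E <= U ^ 2)%N by rewrite expnS expn1 leq_mul //; lia.
    have c3 : (m * E ^ 3 <= U ^ 4)%N.
      have -> : (U ^ 4 = U * U ^ 3)%N by rewrite expnS.
      by rewrite leq_mul // leq_exp2r //; lia.
    have c4 : (U ^ 4 = U ^ 2 * U ^ 2)%N by rewrite -expnD.
    have c5 : (16 * U ^ 4 <= p ^ 2)%N.
      rewrite c4 expnS expn1.
      have -> : (16 * (U ^ 2 * U ^ 2) = (4 * U ^ 2) * (4 * U ^ 2))%N by ring.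
      by rewrite leq_mul // ltnW.
    have c6 : (2 * E ^ 2 * p <= 2 * U ^ 2 * p)%N by rewrite leq_mul2r leq_mul2l c1 !orbT.
    have c7 : (m * E * p <= U ^ 2 * p)%N by rewrite leq_mul2r c2 orbT.
    have c8 : (4 * (U ^ 2 * p) <= p * p)%N by rewrite mulnA leq_mul2r ltnW ?orbT.
    rewrite expnS expn1; lia.
  have -> : (E * (p + m * E) ^ 2 + p * m * (p + m * E) =
     E * p ^ 2 + m * p ^ 2 + m * (2 * E ^ 2 * p + m * E ^ 3 + m * E * p))%N by ring.
  have : (m * (2 * E ^ 2 * p + m * E ^ 3 + m * E * p) <= m * p ^ 2)%N by rewrite leq_mul2l b1 orbT.
  have -> : (p * (p * (E + 2 * m)) = E * p ^ 2 + 2 * m * p ^ 2)%N by ring.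
  lia.
have := leq_trans h1 h2.
by rewrite leq_pmul2l.
Qed.

Definition Sset (U p m : nat) (x y z : 'I_U) (a b : nat) : {set 'I_p * 'I_p} :=
  [set st : 'I_p * 'I_p | [&& hfun p m st.1 st.2 x == a, hfun p m st.1 st.2 y == b &
               hfun p m st.1 st.2 z == b]].
Definition Aset (p m a : nat) : {set 'I_p} := [set u : 'I_p | u %% m == a].
Definition Gz (U : nat) (x y z : 'I_U) : nat :=
  Z.to_nat (Z.gcd (Z.of_nat y - Z.of_nat x) (Z.of_nat z - Z.of_nat x)).

Section PZ.
Local Open Scope Z_scope.

Lemma modeq_div (A B p : nat) : (A %% p = B %% p)%N ->
  (Z.of_nat p | Z.of_nat A - Z.of_nat B).
Proof.
move=> h; exists (Z.of_nat (A %/ p)%N - Z.of_nat (B %/ p)%N).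
have := divn_eq A p; have := divn_eq B p; rewrite h; lia.
Qed.

Lemma hash_inj (U p : nat) (x y : 'I_U) (s1 t1 s2 t2 : 'I_p) :
  prime p -> (U < p)%N -> y != x ->
  ((s1 * x + t1) %% p = (s2 * x + t2) %% p)%N ->
  ((s1 * y + t1) %% p = (s2 * y + t2) %% p)%N -> s1 = s2 /\ t1 = t2.
Proof.
move=> pp Up yx h1 h2.
have hx := ltn_ord x; have hy := ltn_ord y.
have hs1 := ltn_ord s1; have hs2 := ltn_ord s2.
have ht1 := ltn_ord t1; have ht2 := ltn_ord t2.
have d1 := modeq_div h1; have d2 := modeq_div h2.
have d3 := Z.divide_sub_r _ _ _ d2 d1.
have e : Z.of_nat (s1 * y + t1)%N - Z.of_nat (s2 * y + t2)%N -
     (Z.of_nat (s1 * x + t1)%N - Z.of_nat (s2 * x + t2)%N) =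
     (Z.of_nat y - Z.of_nat x) * (Z.of_nat s1 - Z.of_nat s2) by lia.
rewrite e in d3.
have hc : 0 < Z.abs (Z.of_nat y - Z.of_nat x) < Z.of_nat p.
  have : (nat_of_ord y != nat_of_ord x) by [].
  move=> /eqP ne; lia.
have := Zeuclid pp hc d3.
have hsm : Z.abs (Z.of_nat s1 - Z.of_nat s2) < Z.abs (Z.of_nat p) by lia.
move/(small_div hsm) => hs.
have es : s1 = s2 by apply/val_inj => /=; lia.
split=> //; subst s2.
have e2 : Z.of_nat (s1 * x + t1)%N - Z.of_nat (s1 * x + t2)%N =
   Z.of_nat t1 - Z.of_nat t2 by lia.
rewrite e2 in d1.
have htm : Z.abs (Z.of_nat t1 - Z.of_nat t2) < Z.abs (Z.of_nat p) by lia.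
have := small_div htm d1.
by move=> ht; apply/val_inj => /=; lia.
Qed.

End PZ.

Section ALG.
Local Open Scope Z_scope.
Lemma alg_id (S T X Y Zc u v w j l qx qy qz P M B g ty tz : Z) :
  S * X+T = qx * P+u -> S * Y+T = qy * P+v -> S * Zc+T = qz * P+w -> v = j * M+B -> w = l * M+B ->
  Y - X = ty * g -> Zc - X = tz * g ->
  g * ((ty - tz) * (B - u) + M * (ty * l - tz * j)) = ((Zc - X) * (qy-qx) - (Y-X) * (qz-qx)) * P.
Proof.
move=> e1 e2 e3 hv hw hy hz.
have -> : ((Zc - X) * (qy-qx) - (Y-X) * (qz-qx)) * P =
   (Zc - X) * (qy * P - qx * P) - (Y - X) * (qz * P - qx * P) by ring.
have -> : qx * P = S * X+T-u by lia.
have -> : qy * P = S * Y+T-v by lia.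
have -> : qz * P = S * Zc+T-w by lia.
have hY : Y = X + ty * g by lia.
have hZ : Zc = X + tz * g by lia.
subst Y Zc v w; ring.
Qed.
End ALG.

Definition dst (a b : nat) : nat := (a - b) + (b - a).

Section PC.
Local Open Scope Z_scope.

Lemma pair_count (U p m : nat) (x y z : 'I_U) (a b : nat) :
  prime p -> (4 * U ^ 2 < p)%N -> (0 < m)%N -> (m <= U)%N -> y != x -> z != x ->
  (dst z x <= dst y x)%N ->
  (m ^ 2 * dst y x * #|Sset p m x y z a b| <=
     p * #|Aset p m a| * (dst y x + 2 * m * Gz x y z))%N.
Proof.
move=> pp pU m0 mU yx zx hzy.
have Up : (U < p)%N by clear -pU; nia.
have p0 : (0 < p)%N by lia.
have mp : (m < p)%N by lia.
have hxU := ltn_ord x; have hyU := ltn_ord y; have hzU := ltn_ord z.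
have nyx : nat_of_ord y <> nat_of_ord x by move=> e; move/eqP: yx; apply; apply/val_inj.
have nzx : nat_of_ord z <> nat_of_ord x by move=> e; move/eqP: zx; apply; apply/val_inj.
rewrite /Gz.
set dy := Z.of_nat y - Z.of_nat x.
set dz := Z.of_nat z - Z.of_nat x.
set g := Z.gcd dy dz.
have g0 : 0 < g.
  have := Z.gcd_nonneg dy dz; have := Z.gcd_eq_0 dy dz; rewrite -/g /dy; lia.
case: (Z.gcd_divide_l dy dz) => ty hty.
case: (Z.gcd_divide_r dy dz) => tz htz.
rewrite -/g in hty htz.
have gts : Z.gcd ty tz = 1.
  have := Z.gcd_div_gcd dy dz g (ltac:(lia)) erefl.
  by rewrite {1}hty {1}htz !Z.div_mul //; lia.
have hdy : Z.abs dy = Z.of_nat (dst y x) by rewrite /dst /dy; lia.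
have hdz : Z.abs dz = Z.of_nat (dst z x) by rewrite /dst /dz; lia.
have aty : Z.abs dy = Z.abs ty * g by rewrite hty Z.abs_mul; lia.
have atz : Z.abs dz = Z.abs tz * g by rewrite htz Z.abs_mul; lia.
have ty0 : 1 <= Z.abs ty by clear -aty hdy nyx g0; nia.
have gle : g <= Z.abs dy by clear -aty ty0 g0; nia.
have dyU : Z.abs dy < Z.of_nat U by rewrite hdy /dst; clear -hxU hyU; lia.
have hg : 0 < Z.abs g < Z.of_nat p by clear -gle dyU g0 Up; lia.
set E' := Z.to_nat (Z.abs ty - 1).
have hE : Z.abs ty = Z.of_nat E'.+1 by rewrite /E'; lia.
have hst : Z.abs tz <= Z.abs ty by clear -aty atz hdy hdz hzy g0; nia.
set Jm := ((p - 1) %/ m)%N.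
pose Fu (st : 'I_p * 'I_p) : 'I_p := Ordinal (ltn_pmod (st.1 * x + st.2)%N p0).
pose Fj (st : 'I_p * 'I_p) := (((st.1 * y + st.2) %% p) %/ m)%N.
pose Fl (st : 'I_p * 'I_p) := (((st.1 * z + st.2) %% p) %/ m)%N.
pose Bf (u : nat) := (ty - tz) * (Z.of_nat b - Z.of_nat u).
have hA : forall st, st \in Sset p m x y z a b -> Fu st \in Aset p m a.
  move=> st; rewrite !inE /hfun /= => /and3P [/eqP ha _ _].
  by rewrite ha.
have hJ : forall st, st \in Sset p m x y z a b -> (Fj st <= Jm)%N /\ (Fl st <= Jm)%N.
  move=> st _; rewrite /Fj /Fl /Jm; split; apply: leq_div2r;
  have := ltn_pmod (st.1 * _ + st.2)%N p0; lia.
have hC : forall st, st \in Sset p m x y z a b -> (Z.of_nat p |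
     Bf (Fu st) + Z.of_nat m * (ty * Z.of_nat (Fl st) - tz * Z.of_nat (Fj st))).
  move=> [s t]; rewrite !inE /hfun /= => /and3P [_ /eqP hb1 /eqP hb2].
  rewrite /Bf /Fl /Fj /=.
  set u := ((s * x + t) %% p)%N.
  set v := ((s * y + t) %% p)%N.
  set w := ((s * z + t) %% p)%N.
  have ex := divn_eq (s * x + t) p.
  have ey := divn_eq (s * y + t) p.
  have ez := divn_eq (s * z + t) p.
  have ev := divn_eq v m. have ew := divn_eq w m.
  rewrite hb1 in ev; rewrite hb2 in ew.
  apply: (Zeuclid pp hg).
  exists (dz * (Z.of_nat ((s * y + t) %/ p)%N - Z.of_nat ((s * x + t) %/ p)%N) -
          dy * (Z.of_nat ((s * z + t) %/ p)%N - Z.of_nat ((s * x + t) %/ p)%N)).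
  apply: (@alg_id (Z.of_nat s) (Z.of_nat t) (Z.of_nat x) (Z.of_nat y) (Z.of_nat z)
            (Z.of_nat u) (Z.of_nat v) (Z.of_nat w)).
  - by clear -ex; lia.
  - by clear -ey; lia.
  - by clear -ez; lia.
  - by clear -ev; lia.
  - by clear -ew; lia.
  - by rewrite -hty.
  - by rewrite -htz.
have hinj : {in Sset p m x y z a b &, forall st1 st2, Fu st1 = Fu st2 ->
     Fj st1 = Fj st2 -> Fl st1 = Fl st2 -> st1 = st2}.
  move=> [s1 t1] [s2 t2]; rewrite !inE /hfun /=.
  move=> /and3P [_ /eqP hb1 _] /and3P [_ /eqP hb2 _].
  move=> /(congr1 (@nat_of_ord _)) /= hu; rewrite /Fj /= => hj _.
  have e1 := divn_eq ((s1 * y + t1) %% p) m.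
  have e2 := divn_eq ((s2 * y + t2) %% p) m.
  rewrite hb1 hj in e1; rewrite hb2 in e2.
  have hv : ((s1 * y + t1) %% p = (s2 * y + t2) %% p)%N by rewrite e1; exact: esym e2.
  have := hash_inj pp Up yx hu hv.
  by case=> -> ->.
have := @core p m Jm E' ty tz Bf (Sset p m x y z a b) (Aset p m a) Fu Fj Fl pp m0 mp hE hst gts hA hJ hC hinj.
set K := Z.to_nat _.
move=> hcore.
have hmJ : (m * Jm <= p)%N.
  have := leq_trunc_div (p - 1) m; rewrite /Jm; clear; lia.
have hEU : (E'.+1 < U)%N.
  clear -dyU aty hE g0; nia.
have hK : (p * K <= E'.+1 * (Jm + E'.+1))%N.
  have hD : 0 <= Z.of_nat E'.+1 * Z.of_nat Jm + Z.abs tz * Z.of_nat E' by clear; nia.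
  have := Z.mul_div_le (Z.of_nat E'.+1 * Z.of_nat Jm + Z.abs tz * Z.of_nat E') _
            (ltac:(lia) : 0 < Z.of_nat p).
  have := Z.div_pos _ _ hD (ltac:(lia) : 0 < Z.of_nat p).
  rewrite /K; clear -hE hst; nia.
have har := arith_pair m0 mU (ltn0Sn E') hEU pU hmJ hK.
have hdG : dst y x = (E'.+1 * Z.to_nat g)%N by clear -hdy aty hE g0; nia.
rewrite hdG.
have : (m ^ 2 * E'.+1 * #|Sset p m x y z a b| <= p * #|Aset p m a| * (E'.+1 + 2 * m))%N.
  apply: (@leq_trans (m ^ 2 * (#|Aset p m a| * (Jm + E').+1 * K.+1))).
    by rewrite -mulnA [(E'.+1 * _)%N]mulnC leq_mul2l hcore orbT.
  have -> : (Jm + E').+1 = (Jm + E'.+1)%N by rewrite addnS.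
  have -> : (m ^ 2 * (#|Aset p m a| * (Jm + E'.+1) * K.+1) =
        #|Aset p m a| * (m ^ 2 * (Jm + E'.+1) * K.+1))%N by ring.
  have -> : (p * #|Aset p m a| * (E'.+1 + 2 * m) = #|Aset p m a| * (p * (E'.+1 + 2 * m)))%N by ring.
  by rewrite leq_mul2l har orbT.
move=> h.
have -> : (m ^ 2 * (E'.+1 * Z.to_nat g) * #|Sset p m x y z a b| =
   (m ^ 2 * E'.+1 * #|Sset p m x y z a b|) * Z.to_nat g)%N by ring.
have -> : (p * #|Aset p m a| * (E'.+1 * Z.to_nat g + 2 * m * Z.to_nat g) =
   (p * #|Aset p m a| * (E'.+1 + 2 * m)) * Z.to_nat g)%N by ring.
by rewrite leq_mul2r h orbT.
Qed.
End PC.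

Lemma sum_pair (T1 T2 : finType) (F : T1 * T2 -> nat) :
  (\sum_q F q = \sum_a \sum_b F (a, b))%N.
Proof. by rewrite pair_bigA; apply: eq_bigr => -[]. Qed.

Lemma card_triple (p U : nat) (P : 'I_p * 'I_p -> 'I_U -> 'I_U -> bool) :
  #|[set q : 'I_p * 'I_p * 'I_U * 'I_U | P q.1.1 q.1.2 q.2]| =
  (\sum_(y : 'I_U) \sum_(z : 'I_U) #|[set st : 'I_p * 'I_p | P st y z]|)%N.
Proof.
rewrite -sum1_card big_mkcond /= sum_pair.
rewrite (eq_bigr (fun a => \sum_(z : 'I_U) if P a.1 a.2 z then 1 else 0)%N); last first.
  by move=> a _; apply: eq_bigr => z _; rewrite inE.
rewrite sum_pair exchange_big /=; apply: eq_bigr => y _.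
rewrite exchange_big /=; apply: eq_bigr => z _.
by rewrite -sum1_card [RHS]big_mkcond /=; apply: eq_bigr => st _; rewrite inE.
Qed.

Lemma cond_count_eq (U p m : nat) (X : {set 'I_U}) (x : 'I_U) (a : nat) :
  cond_count U p m X x a =
  (#|[set st : 'I_p * 'I_p | hfun p m st.1 st.2 x == a]| * #|X| * #|X|)%N.
Proof.
rewrite /cond_count -!cardsX; apply: eq_card => -[[st y] z].
by rewrite !inE /= andbA.
Qed.

Lemma joint_count_eq (U p m : nat) (X : {set 'I_U}) (x : 'I_U) (a b : nat) :
  joint_count U p m X x a b =
  (\sum_(y in X) \sum_(z in X) #|Sset p m x y z a b|)%N.
Proof.
rewrite /joint_count.
rewrite (card_triple (fun st y z => [&& hfun p m st.1 st.2 x == a, y \in X, z \in X,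
          hfun p m st.1 st.2 y == b & hfun p m st.1 st.2 z == b])).
rewrite [RHS]big_mkcond /=; apply: eq_bigr => y _.
case: (boolP (y \in X)) => hy; last first.
  rewrite big1 // => z _.
  by apply/eqP; rewrite cards_eq0; apply/eqP/setP => st; rewrite !inE ?(negbTE hy) /= ?andbF.
rewrite [RHS]big_mkcond /=; apply: eq_bigr => z _.
case: (boolP (z \in X)) => hz /=.
- by apply: eq_card => st; rewrite !inE ?hy ?hz.
- by apply/eqP; rewrite cards_eq0; apply/eqP/setP => st; rewrite !inE ?hy ?(negbTE hz) /= ?andbF.
Qed.

Lemma card_Sx (p m : nat) (x : nat) (a : nat) : (0 < p)%N ->
  #|[set st : 'I_p * 'I_p | hfun p m st.1 st.2 x == a]| = (p * #|Aset p m a|)%N.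
Proof.
move=> p0.
rewrite -sum1_card big_mkcond /= sum_pair.
rewrite (eq_bigr (fun _ => #|Aset p m a|)); last first.
  move=> s _.
  pose f (t : 'I_p) : 'I_p := Ordinal (ltn_pmod (s * x + t)%N p0).
  have finj : injective f.
    move=> t1 t2 /(congr1 (@nat_of_ord _)) /= h; apply/val_inj => /=.
    have h1 := ltn_ord t1; have h2 := ltn_ord t2.
    move: h; rewrite -modnDml -[X in _ = X]modnDml.
    set c := ((s * x) %% p)%N => h.
    have := eqn_modDl c t1 t2 p. rewrite h eqxx => /esym /eqP.
    by rewrite !modn_small.
  rewrite -(card_preimset (Aset p m a) finj).
  rewrite -sum1_card [RHS]big_mkcond /=; apply: eq_bigr => t _.
  by rewrite !inE /hfun.
by rewrite sum_nat_const card_ord mulnC.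
Qed.

Lemma mult_count_aux (d a n : nat) : (0 < d)%N ->
  (\sum_(c < n.+1) ((0 < c <= a) && (d %| c)) <= minn n a %/ d)%N.
Proof.
move=> d0; elim: n => [|n IH]; first by rewrite big_ord_recr big_ord0.
rewrite big_ord_recr /=.
case: (leqP n.+1 a) => h.
- have e : minn n a = n by apply/minn_idPl; lia.
  rewrite e in IH; rewrite divnS //.
  move: IH; case: (d %| n.+1) => /=; lia.
- have e : minn n a = a by apply/minn_idPr; lia.
  rewrite e in IH.
  by rewrite /= addn0.
Qed.

Lemma mult_count (d a n : nat) : (0 < d)%N ->
  (\sum_(c < n) ((0 < c <= a) && (d %| c)) <= a %/ d)%N.
Proof.
move=> d0; case: n => [|n]; first by rewrite big_ord0.
apply: (leq_trans (mult_count_aux a n d0)).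
by apply: leq_div2r; apply: geq_minr.
Qed.

Lemma fiber (U : nat) (X : {set 'I_U}) (f : 'I_U -> nat) (F : nat -> nat) :
  (forall y, y \in X -> (f y < U)%N) ->
  (forall n, (#|[set y in X | f y == n]| <= 2)%N) ->
  (\sum_(y in X) F (f y) <= 2 * \sum_(c < U) F c)%N.
Proof.
move=> hf hfib.
have e : (\sum_(y in X) F (f y) =
    \sum_(c < U) \sum_(y in X) ((f y == c) * F c))%N.
  rewrite exchange_big /=; apply: eq_bigr => y hy.
  rewrite (bigD1 (Ordinal (hf y hy))) //= eqxx mul1n big1 ?addn0 //.
  move=> c hc; case: eqP => // h; exfalso; move/eqP: hc; apply; apply/val_inj.
  by rewrite /= h.
rewrite e big_distrr /= leq_sum // => c _.
have -> : (\sum_(y in X) (f y == c) * F c = #|[set y in X | f y == c]| * F c)%N.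
  rewrite -sum_nat_const big_mkcond [RHS]big_mkcond /=; apply: eq_bigr => y _.
  by rewrite !inE; case: (y \in X); case: (f y == c); rewrite /= ?mul1n ?mul0n.
by rewrite leq_mul2r hfib orbT.
Qed.

Definition Gam (U a c : nat) : nat := (\sum_(i < U) ((i.+1 %| a) && (i.+1 %| c)) * i.+1)%N.
Definition tau (U a : nat) : nat := (\sum_(i < U) (i.+1 %| a))%N.

Lemma Gam_sym U a c : Gam U a c = Gam U c a.
Proof. by apply: eq_bigr => i _; rewrite andbC. Qed.

Lemma Gam_ge (U a c g : nat) : (0 < g)%N -> (g <= U)%N -> (g %| a) -> (g %| c) ->
  (g <= Gam U a c)%N.
Proof.
move=> g0 gU ga gc.
have hi : (g.-1 < U)%N by lia.
rewrite /Gam (bigD1 (Ordinal hi)) //= prednK // ga gc /= mul1n.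
by apply: leq_addr.
Qed.

Lemma Gam_sum (U a : nat) :
  (\sum_(c < U) ((0 < c <= a) * Gam U a c) <= a * tau U a)%N.
Proof.
rewrite /Gam /tau.
have -> : (\sum_(c < U) (0 < c <= a) * (\sum_(i < U) ((i.+1 %| a) && (i.+1 %| c)) * i.+1) =
   \sum_(i < U) (i.+1 %| a) * i.+1 * \sum_(c < U) ((0 < c <= a) && (i.+1 %| c)))%N.
  under eq_bigr => c _ do rewrite big_distrr /=.
  rewrite exchange_big /=; apply: eq_bigr => i _.
  rewrite big_distrr /=; apply: eq_bigr => c _.
  by case: (i.+1 %| a); case: (0 < c <= a); case: (i.+1 %| c); rewrite /= ?muln0 ?mul0n ?muln1 ?mul1n.
rewrite big_distrr /= leq_sum // => i _.
case: (boolP (i.+1 %| a)) => hd /=; last by rewrite !mul0n muln0.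
rewrite mul1n muln1.
apply: (@leq_trans (i.+1 * (a %/ i.+1))%N).
  by rewrite leq_mul2l mult_count // orbT.
by rewrite mulnC divnK.
Qed.

Lemma tau_sum (U : nat) :
  (\sum_(c < U) ((0 < c) * tau U c) <= \sum_(i < U) (U.-1 %/ i.+1))%N.
Proof.
rewrite /tau.
have -> : (\sum_(c < U) (0 < c) * (\sum_(i < U) (i.+1 %| c)) =
   \sum_(i < U) \sum_(c < U) ((0 < c <= U.-1) && (i.+1 %| c)))%N.
  under eq_bigr => c _ do rewrite big_distrr /=.
  rewrite exchange_big /=; apply: eq_bigr => i _; apply: eq_bigr => c _.
  have hc := ltn_ord c.
  have -> : (c <= U.-1)%N by lia.
  by case: (0 < nat_of_ord c); case: (i.+1 %| c).
by apply: leq_sum => i _; apply: mult_count.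
Qed.

Section RealSum.
Import Order.TTheory GRing.Theory Num.Theory.
Local Open Scope ring_scope.
Variable RR : realFieldType.

Lemma sum_gcd (U : nat) (X : {set 'I_U}) (f : 'I_U -> nat) (G : 'I_U -> 'I_U -> nat) :
  (forall y, y \in X -> (0 < f y < U)%N) ->
  (forall n, (#|[set y in X | f y == n]| <= 2)%N) ->
  (forall y z, y \in X -> z \in X -> (G y z %| f y)%N /\ (G y z %| f z)%N) ->
  \sum_(y in X) \sum_(z in X) ((G y z)%:R / (maxn (f y) (f z))%:R : RR) <=
    8%:R * (\sum_(i < U) (U.-1 %/ i.+1))%N%:R.
Proof.
move=> hf hfib hG.
pose Psi (a c : nat) : RR := ((c <= a) * Gam U a c)%N%:R / a%:R.
have Psi0 : forall a c, 0 <= Psi a c by move=> a c; rewrite divr_ge0 ?ler0n.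
have step1 : forall y z, y \in X -> z \in X ->
    (G y z)%:R / (maxn (f y) (f z))%:R <= Psi (f y) (f z) + Psi (f z) (f y).
  move=> y z hy hz.
  have [hy1 hy2] := andP (hf y hy); have [hz1 hz2] := andP (hf z hz).
  have [g1 g2] := hG y z hy hz.
  have gle : (G y z <= f y)%N by apply: dvdn_leq.
  have gpos : (0 < G y z)%N.
    case: (posnP (G y z)) => // e; move: g1; rewrite e dvd0n => /eqP fe; lia.
  have hGam : (G y z <= Gam U (f y) (f z))%N by apply: Gam_ge => //; lia.
  case: (leqP (f z) (f y)) => hzy.
  - apply: (@le_trans _ _ (Psi (f y) (f z))); last by rewrite lerDl Psi0.
    rewrite /Psi hzy mul1n.
    by apply: ler_wpM2r; rewrite ?invr_ge0 ?ler0n // ler_nat.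
  - apply: (@le_trans _ _ (Psi (f z) (f y))); last by rewrite lerDr Psi0.
    rewrite /Psi (ltnW hzy) mul1n Gam_sym.
    by apply: ler_wpM2r; rewrite ?invr_ge0 ?ler0n // ler_nat.
have step3 : forall y, y \in X -> \sum_(z in X) Psi (f y) (f z) <= 2%:R * (tau U (f y))%:R.
  move=> y hy; set a := f y.
  have a0 : (0 < a)%N by have := hf y hy; rewrite /a; lia.
  rewrite /Psi -mulr_suml -natr_sum.
  rewrite ler_pdivrMr ?ltr0n // -!natrM ler_nat.
  have -> : (\sum_(z in X) ((f z <= a) * Gam U a (f z)) =
             \sum_(z in X) ((0 < f z <= a) * Gam U a (f z)))%N.
    by apply: eq_bigr => z hz; have := hf z hz; case/andP => -> _.
  apply: (leq_trans (fiber (fun c => (0 < c <= a) * Gam U a c)%N _ hfib)).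
    by move=> z hz; have := hf z hz; case/andP.
  have h := Gam_sum U a.
  by rewrite -mulnA [(tau U a * a)%N]mulnC leq_mul2l h orbT.
have step4 : (\sum_(y in X) tau U (f y) <= 2 * \sum_(i < U) (U.-1 %/ i.+1))%N.
  have -> : (\sum_(y in X) tau U (f y) = \sum_(y in X) ((0 < f y) * tau U (f y)))%N.
    by apply: eq_bigr => y hy; have := hf y hy; case/andP => -> _; rewrite mul1n.
  apply: (leq_trans (fiber (fun c => (0 < c) * tau U c)%N _ hfib)).
    by move=> z hz; have := hf z hz; case/andP.
  by rewrite leq_mul2l tau_sum.
apply: (@le_trans _ _ (\sum_(y in X) \sum_(z in X) (Psi (f y) (f z) + Psi (f z) (f y)))).
  by apply: ler_sum => y hy; apply: ler_sum => z hz; apply: step1.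
have -> : \sum_(y in X) \sum_(z in X) (Psi (f y) (f z) + Psi (f z) (f y)) =
   2%:R * \sum_(y in X) \sum_(z in X) Psi (f y) (f z).
  under eq_bigr => y _ do rewrite big_split /=.
  rewrite big_split /= [X in _ + X = _]exchange_big /=.
  by rewrite mulr2n mulrDl mul1r.
apply: (@le_trans _ _ (2%:R * \sum_(y in X) (2%:R * (tau U (f y))%:R))).
  by rewrite ler_pM2l ?ltr0n //; apply: ler_sum => y hy; apply: step3.
rewrite -mulr_sumr -natr_sum mulrA -!natrM ler_nat.
move: step4; lia.
Qed.

End RealSum.

Section RealLn.
Import Order.TTheory GRing.Theory Num.Theory.
Local Open Scope ring_scope.
Notation RR := Rdefinitions.R.

Lemma harm_div (U : nat) :
  ((\sum_(i < U) (U.-1 %/ i.+1))%N%:R : RR) <= U%:R * \sum_(i < U) (i.+1%:R)^-1.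
Proof.
rewrite natr_sum mulr_sumr; apply: ler_sum => i _.
rewrite ler_pdivlMr ?ltr0n // -natrM ler_nat.
apply: (leq_trans (leq_trunc_div _ _)); lia.
Qed.

Lemma key_ln (n : nat) : (0 < n)%N ->
  ((n.+1)%:R)^-1 <= ln (n.+1)%:R - ln n%:R :> RR.
Proof.
move=> n0.
set N := n%:R : RR; set N1 := n.+1%:R : RR.
have N0 : 0 < N by rewrite ltr0n.
have N10 : 0 < N1 by rewrite ltr0n.
have eN1 : N1 = N + 1 by rewrite /N1 /N -addn1 natrD.
have ey : 1 - N1^-1 = N / N1.
  by rewrite eN1; field; rewrite -eN1 lt0r_neq0.
have yn0 : - N1^-1 <> 0.
  move/eqP; rewrite oppr_eq0 invr_eq0 => /eqP h; move: N10; rewrite h ltxx.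
  by [].
have h1 : 1 + - N1^-1 < exp (- N1^-1) by apply/RltP; apply: exp_ineq1.
have pos : 0 < N / N1 by rewrite divr_gt0.
have h2 : ln (N / N1) < - N1^-1.
  rewrite -[X in _ < X](ln_exp (- N1^-1)); apply/RltP; apply: ln_increasing.
    by apply/RltP.
  by apply/RltP; move: h1; rewrite ey.
have h3 : ln (Rmult N (Rinv N1)) = Rminus (ln N) (ln N1).
  rewrite ln_mult ?ln_Rinv //; try by apply/RltP.
  by apply/RltP; rewrite invr_gt0.
rewrite RmultE RinvE RminusE in h3.
rewrite h3 in h2.
move: h2; move: (ln N) (ln N1) (N1^-1) => A B C h2; lra.
Qed.

Lemma harm (n : nat) : (0 < n)%N -> \sum_(i < n) (i.+1%:R)^-1 <= 1 + ln n%:R :> RR.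
Proof.
elim: n => [//|n IH] _.
case: n IH => [|n] IH.
  have l1 : ln (1 : RR) = 0 := ln_1.
  by rewrite big_ord1 /= invr1 l1 addr0.
rewrite big_ord_recr /=.
have := IH erefl; have := key_ln (ltn0Sn n).
set S := (\sum_(i < n.+1) _); set C := ((n.+2)%:R)^-1.
set A := ln (n.+2)%:R; set B := ln (n.+1)%:R.
clearbody S C A B; lra.
Qed.

Lemma lnU_ge (U : nat) : (2 <= U)%N -> 2^-1 < ln U%:R :> RR.
Proof.
move=> U2.
have h := ln_lt_2.
have e2 : IZR 2 = (2%:R : RR) by rewrite -INRE INR_IZR_INZ.
rewrite e2 in h; move/RltP: h => h.
apply: (lt_le_trans h).
case: (ltngtP U 2) => hU; first by lia.
- apply/RleP; apply: Rlt_le; apply: ln_increasing; apply/RltP; first by rewrite ltr0n.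
  by rewrite ltr_nat.
- by rewrite hU.
Qed.

End RealLn.

Lemma Gz_sym (U : nat) (x y z : 'I_U) : Gz x y z = Gz x z y.
Proof. by rewrite /Gz Z.gcd_comm. Qed.

Lemma Sset_sym (U p m : nat) (x y z : 'I_U) (a b : nat) :
  Sset p m x y z a b = Sset p m x z y a b.
Proof.
by apply/setP => st; rewrite !inE (andbC (hfun _ _ _ _ y == b)).
Qed.

Section GZD.
Local Open Scope Z_scope.
Lemma Gz_dvd_aux (U : nat) (x y z : 'I_U) :
  (Gz x y z %| dst y x)%N.
Proof.
rewrite /Gz.
set dy := Z.of_nat y - Z.of_nat x; set dz := Z.of_nat z - Z.of_nat x.
case: (Z.gcd_divide_l dy dz) => q hq.
have g0 := Z.gcd_nonneg dy dz.
have e : Z.abs dy = Z.abs q * Z.gcd dy dz by rewrite {1}hq Z.abs_mul (Z.abs_eq (Z.gcd dy dz)).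
apply/dvdnP; exists (Z.to_nat (Z.abs q)).
have hd : Z.of_nat (dst y x) = Z.abs dy by rewrite /dst /dy; lia.
move: e hd g0; move: (Z.gcd dy dz) => g; move: (Z.abs dy) => D e hd g0.
have q0 : 0 <= Z.abs q by lia.
move: (Z.abs q) q0 e => Q q0 e; subst D.
apply: Nat2Z.inj; rewrite Nat2Z.inj_mul !Z2Nat.id //; lia.
Qed.
End GZD.

Lemma Gz_dvd (U : nat) (x y z : 'I_U) :
  (Gz x y z %| dst y x)%N /\ (Gz x y z %| dst z x)%N.
Proof. by split; [apply: Gz_dvd_aux | rewrite Gz_sym; apply: Gz_dvd_aux]. Qed.

Lemma fib2 (U : nat) (X : {set 'I_U}) (x : 'I_U) (n : nat) :
  (#|[set y in X | dst y x == n]| <= 2)%N.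
Proof.
pose f (y : 'I_U) := (nat_of_ord x <= y)%N.
have inj : {in [set y in X | dst y x == n] &, injective f}.
  move=> y1 y2; rewrite !inE /f /dst => /andP [_ /eqP h1] /andP [_ /eqP h2] hf.
  apply/val_inj => /=.
  case: (leqP x y1) hf => c1; case: (leqP x y2) => c2 //= _; lia.
rewrite -(card_in_imset inj).
by apply: (leq_trans (max_card _)); rewrite card_bool.
Qed.

Section PR.
Import Order.TTheory GRing.Theory Num.Theory.
Local Open Scope ring_scope.
Notation RR := Rdefinitions.R.

Lemma pair_real (U p m : nat) (x y z : 'I_U) (a b : nat) :
  prime p -> (4 * U ^ 2 < p)%N -> (0 < m)%N -> (m <= U)%N -> y != x -> z != x ->
  (#|Sset p m x y z a b|%:R : RR) <=
    (p * #|Aset p m a|)%N%:R * ((m%:R * m%:R)^-1 +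
      2%:R * ((Gz x y z)%:R / (maxn (dst y x) (dst z x))%:R) / m%:R).
Proof.
move=> pp pU m0 mU yx zx.
have key : (m ^ 2 * maxn (dst y x) (dst z x) * #|Sset p m x y z a b| <=
   p * #|Aset p m a| * (maxn (dst y x) (dst z x) + 2 * m * Gz x y z))%N.
  case: (leqP (dst z x) (dst y x)) => h.
  - by apply: pair_count.
  - rewrite Sset_sym Gz_sym; apply: pair_count => //; lia.
have M0 : (0 < maxn (dst y x) (dst z x))%N.
  have : nat_of_ord y <> nat_of_ord x by move=> e; move/eqP: yx; apply; apply/val_inj.
  rewrite /dst; lia.
set M := maxn _ _ in key M0 *.
set S := #|Sset _ _ _ _ _ _ _| in key *.
set A := #|Aset _ _ _| in key *.
set G := Gz x y z in key *.
have -> : (m%:R * m%:R)^-1 + 2%:R * (G%:R / M%:R) / m%:R =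
     (M + 2 * m * G)%N%:R / (m ^ 2 * M)%N%:R :> RR.
  rewrite !natrD !natrM ?natrX; field.
  by rewrite !pnatr_eq0 -!lt0n m0 M0.
rewrite mulrA ler_pdivlMr ?ltr0n ?muln_gt0 ?expn_gt0 ?m0 ?M0 //.
by rewrite -!natrM ler_nat mulnC.
Qed.
End PR.

Section MainSec.
Import Order.TTheory GRing.Theory Num.Theory.

Lemma T_bound (U : nat) (X : {set 'I_U}) (x : 'I_U) : x \notin X -> (2 <= U)%N ->
  (\sum_(y in X) \sum_(z in X) ((Gz x y z)%:R / (maxn (dst y x) (dst z x))%:R : R) <=
    24%:R * (U%:R * ln U%:R))%R.
Proof.
move=> xX U2.
apply: (le_trans (@sum_gcd R U X (fun y => dst y x) (fun y z => Gz x y z) _ _ _)).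
- move=> y hy; have hyU := ltn_ord y; have hxU := ltn_ord x.
  have : nat_of_ord y <> nat_of_ord x.
    move=> e; have exy : y = x by apply/val_inj.
    by move: hy; rewrite exy (negbTE xX).
  rewrite /dst; lia.
- by move=> n; apply: fib2.
- by move=> y z _ _; apply: Gz_dvd.
have h1 := harm_div U.
have h2 := harm (ltn_trans (ltn0Sn 0) U2).
have h3 := lnU_ge U2.
have U0 : (0 <= U%:R :> R)%R by rewrite ler0n.
set H := (\sum_(i < U) _)%R in h1 h2.
set S := ((\sum_(i < U) _)%N%:R)%R in h1 *.
set L := ln _ in h2 h3 *.
set u := (U%:R)%R in h1 U0 *.
have : (S <= u * (1 + L))%R by apply: (le_trans h1); rewrite ler_wpM2l.
clearbody S H L u.
move=> h4.
have : (u * (1 + L) <= u * (3%:R * L))%R by rewrite ler_wpM2l //; lra.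
move=> h5.
have : (8%:R * S <= 8%:R * (u * (3%:R * L)))%R by rewrite ler_wpM2l ?ler0n //; apply: le_trans h5.
move=> h6; apply: (le_trans h6).
by rewrite (_ : (24%:R * (u * L) = 8%:R * (u * (3%:R * L)))%R) //; ring.
Qed.

End MainSec.

Import Order.TTheory GRing.Theory Num.Theory.

Theorem theorem11p2 :
  exists C : R,
  forall (U : nat) (X : {set 'I_U}) (p m : nat) (x : 'I_U) (a b : 'I_m),
    prime p -> (4 * U ^ 2 < p)%N -> (0 < m)%N -> (m <= U)%N ->
    x \notin X -> (0 < #|X|)%N ->
    Rle (cond_prob U p m X x a b)
        (Rplus (Rdiv 1 (Rmult (INR m) (INR m)))
               (Rdiv (Rmult C (Rmult (INR U) (ln (INR U))))
                     (Rmult (INR m) (Rmult (INR #|X|) (INR #|X|))))).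
Proof.
exists (48%:R)%R.
move=> U X p m x a b pp pU m0 mU xX k0.
have [y0 hy0] : exists y0, y0 \in X by apply/set0Pn; rewrite -card_gt0.
have U2 : (2 <= U)%N.
  have hyU := ltn_ord y0; have hxU := ltn_ord x.
  have : nat_of_ord y0 <> nat_of_ord x.
    move=> e; have exy : y0 = x by apply/val_inj.
    by move: hy0; rewrite exy (negbTE xX).
  lia.
have p0 : (0 < p)%N by nia.
have A0 : (0 < #|Aset p m a|)%N.
  have ha : (nat_of_ord a < p)%N by have := ltn_ord a; nia.
  rewrite card_gt0; apply/set0Pn; exists (Ordinal ha).
  by rewrite inE /= modn_small.
apply/RleP.
rewrite /cond_prob !RdivE !RplusE !RmultE !INRE.
rewrite cond_count_eq card_Sx // joint_count_eq.
set A := #|Aset p m a| in A0 *.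
set k := #|X| in k0 *.
set c := ((p * A)%N%:R : R)%R.
set al := ((m%:R * m%:R)^-1 : R)%R.
set T := (\sum_(y in X) \sum_(z in X) ((Gz x y z)%:R / (maxn (dst y x) (dst z x))%:R : R))%R.
have hS : ((\sum_(y in X) \sum_(z in X) #|Sset p m x y z a b|)%N%:R <=
    \sum_(y in X) \sum_(z in X) (c * (al + 2%:R * ((Gz x y z)%:R /
        (maxn (dst y x) (dst z x))%:R) / m%:R)))%R.
  rewrite natr_sum; apply: ler_sum => y hy; rewrite natr_sum; apply: ler_sum => z hz.
  have nx : forall w, w \in X -> w != x.
    by move=> w hw; apply/eqP => e; move: hw; rewrite e (negbTE xX).
  by apply: pair_real => //; apply: nx.
have ex : forall g : R, (c * (al + 2%:R * g / m%:R) = c * al + (c * 2%:R / m%:R) * g)%R.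
  by move=> g; ring.
have hE : (\sum_(y in X) \sum_(z in X) (c * (al + 2%:R * ((Gz x y z)%:R /
        (maxn (dst y x) (dst z x))%:R) / m%:R)) =
     c * al * (k%:R * k%:R) + (c * 2%:R / m%:R) * T)%R.
  under eq_bigr => y _ do under eq_bigr => z _ do rewrite ex.
  under eq_bigr => y _ do rewrite big_split /= sumr_const -mulr_sumr.
  rewrite big_split /= sumr_const -mulr_sumr.
  rewrite -/k -mulrnA -[(c * al *+ _)%R]mulr_natr natrM /T; ring.
have hT := T_bound xX U2.
have m0R : (0 < m%:R :> R)%R by rewrite ltr0n.
have k0R : (0 < k%:R :> R)%R by rewrite ltr0n.
have c0 : (0 < c)%R by rewrite ltr0n muln_gt0 p0 A0.
rewrite ler_pdivrMr; last by rewrite ltr0n !muln_gt0 p0 A0 k0.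
apply: (le_trans hS); rewrite hE.
have h1 : ((c * 2%:R / m%:R) * T <= (c * 2%:R / m%:R) * (24%:R * (U%:R * ln U%:R)))%R.
  by rewrite ler_wpM2l // divr_ge0 // ?mulr_ge0 ?ler0n // ltW.
apply: (@le_trans _ _ (c * al * (k%:R * k%:R) + (c * 2%:R / m%:R) * (24%:R * (U%:R * ln U%:R)))%R).
  by rewrite lerD2l.
rewrite !natrM /c /al natrM R1E.
have mn0 : (m%:R != 0 :> R)%R by rewrite lt0r_neq0.
have kn0 : (k%:R != 0 :> R)%R by rewrite lt0r_neq0.
rewrite le_eqVlt; apply/orP; left; apply/eqP; field.
by rewrite mn0 kn0.
Qed.
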